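(* Let $\alpha\in(0,1)$ be irrational with denominators $(q_n)$, and let $M_n=\lfloor (q_n-1)/2\rfloor$. Then $$P_{q_n}(\alpha)=\Theta\left(c_n\exp\Big(-2c_n\sum_{t=1}^{M_n-1}\frac{D_t(\alpha_n^-)}{t(t+1)}\Big)\right)\quad\text{as } n\to\infty.$$ That is, there are constants $0<c\le C$, independent of $n$, such that for all sufficiently large $n$ the quantity $P_{q_n}(\alpha)$ lies between $c$ and $C$ times the expression inside $\Theta$.
   Context: For real $\alpha$ and $N\in\mathbb N$ let $P_N(\alpha)=\prod_{r=1}^N|2\sin(\pi r\alpha)|$. Write $\alpha=[0;a_1,a_2,\ldots]$. Its convergents $p_n/q_n$ are indexed by $q_0=0$, $q_1=1$, $q_{n+1}=a_nq_n+q_{n-1}$ and $p_0=1$, $p_1=0$, $p_{n+1}=a_np_n+p_{n-1}$. Define $\alpha_n^+=[a_n;a_{n+1},a_{n+2},\ldots]$ and $\alpha_n^-=[0;a_{n-1},a_{n-2},\ldots,a_1]$; one has $\alpha_n^-=q_{n-1}/q_n$. Define $c_n=1/(\alpha_n^++\alpha_n^-)$. For real $\beta$ and $t\in\mathbb N$ let $D_t(\beta)=\sum_{s=1}^t\left(\{\beta s\}-\tfrac12\right)$, where $\{x\}$ denotes the fractional part of $x$. *)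

(* Defs.v *)
From Stdlib Require Import Reals ZArith.
Open Scope R_scope.

Fixpoint prod1 (f : nat -> R) (N : nat) : R :=
  match N with O => 1 | S m => prod1 f m * f (S m) end.
Fixpoint sum1 (f : nat -> R) (N : nat) : R :=
  match N with O => 0 | S m => sum1 f m + f (S m) end.

Definition P (N : nat) (alpha : R) : R :=
  prod1 (fun r => Rabs (2 * sin (PI * INR r * alpha))) N.

(* fractional part {x} = x - floor x  (Stdlib: Int_part = floor) *)
Definition frac (x : R) : R := frac_part x.

Definition D (t : nat) (beta : R) : R :=
  sum1 (fun s => frac (beta * INR s) - / 2) t.

Definition irrational (x : R) : Prop :=
  ~ exists (p q : Z), q <> 0%Z /\ x = IZR p / IZR q.

(* Gauss map iterates: gx alpha k = x_{k+1}, with x_1 = alpha and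
   x_{k+1} = {1/x_k}; so x_n = [0; a_n, a_{n+1}, ...]. *)
Fixpoint gx (alpha : R) (k : nat) : R :=
  match k with O => alpha | S m => frac (/ gx alpha m) end.

(* partial quotients a_n = floor(1/x_n), n >= 1 (a_0 unused, set to 0) *)
Definition a (alpha : R) (n : nat) : nat :=
  match n with O => O | S m => Z.to_nat (Int_part (/ gx alpha m)) end.

(* qpair n = (q_n, q_{n+1}); q_0 = 0, q_1 = 1, q_{n+1} = a_n q_n + q_{n-1} *)
Fixpoint qpair (alpha : R) (n : nat) : nat * nat :=
  match n with
  | O => (0%nat, 1%nat)
  | S m => let (u, v) := qpair alpha m in (v, (a alpha (S m) * v + u)%nat)
  end.
Definition q (alpha : R) (n : nat) : nat := fst (qpair alpha n).

(* alpha_n^+ = [a_n; a_{n+1}, ...] = 1 / x_n  (n >= 1) *)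
Definition alpha_plus (alpha : R) (n : nat) : R := / gx alpha (n - 1).
Definition alpha_minus (alpha : R) (n : nat) : R :=
  INR (q alpha (n - 1)) / INR (q alpha n).
Definition c (alpha : R) (n : nat) : R :=
  / (alpha_plus alpha n + alpha_minus alpha n).

Definition M (alpha : R) (n : nat) : nat := ((q alpha n - 1) / 2)%nat.

Definition theta_expr (alpha : R) (n : nat) : R :=
  c alpha n * exp (- 2 * c alpha n *
    sum1 (fun t => D t (alpha_minus alpha n) / (INR t * INR (t + 1)))
         (M alpha n - 1)).

(* Main.v *)
Require Import Defs.
From Stdlib Require Import Reals ZArith.
From Stdlib Require Import Lra Lia List Permutation.
From mathcomp Require ssreflect ssrfun ssrbool eqtype ssrnat seq div fintype bigop ssralg ssrnum poly complex Rstruct.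
Open Scope R_scope.

Module MC.
Import ssreflect ssrfun ssrbool eqtype ssrnat seq div fintype bigop ssralg ssrnum poly complex Rstruct.
Import GRing.Theory Num.Theory.
Local Open Scope ring_scope.
Local Open Scope complex_scope.

Definition E (t : R) : R[i] := Complex (cos t) (sin t).

Lemma E_mul a b : E a * E b = E (Rplus a b).
Proof.
rewrite /E /GRing.mul /= cos_plus sin_plus.
congr Complex; rewrite -?RplusE -?RmultE -?RminusE; lra.
Qed.

Lemma E_exp t k : E t ^+ k = E (Rmult (INR k) t).
Proof.
elim: k => [|k IH].
  by rewrite expr0 /= Rmult_0_l /E cos_0 sin_0.
by rewrite exprS IH E_mul S_INR; congr E; rewrite -?RplusE -?RmultE; lra.
Qed.

Section Q.
Variable Q : nat.
Hypothesis Q0 : (0 < Q)%N.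
Let z := E (Rdiv (Rmult 2 PI) (INR Q)).

Lemma INRQ_pos : Rlt 0 (INR Q).
Proof. apply: lt_0_INR; apply/ssrnat.ltP; exact: Q0. Qed.

Lemma zQ : z ^+ Q = 1.
Proof.
rewrite /z E_exp.
have -> : Rmult (INR Q) (Rdiv (Rmult 2 PI) (INR Q)) = Rmult 2 PI.
  have := INRQ_pos; move=> H; field; lra.
by rewrite /E cos_2PI sin_2PI.
Qed.

Lemma zk k : (0 < k < Q)%N -> z ^+ k != 1.
Proof.
move=> /andP [k0 kQ]; rewrite /z E_exp; apply/eqP => h.
have : cos (Rmult (INR k) (Rdiv (Rmult 2 PI) (INR Q))) = 1%R by case: h.
set y := Rdiv (Rmult (INR k) PI) (INR Q).
have -> : Rmult (INR k) (Rdiv (Rmult 2 PI) (INR Q)) = Rmult 2 y.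
  rewrite /y; have := INRQ_pos => H; field; lra.
rewrite cos_2a_sin.
have : Rlt 0 (sin y).
  apply: sin_gt_0.
    rewrite /y; apply: Rdiv_lt_0_compat; last exact: INRQ_pos.
    apply: Rmult_lt_0_compat; last exact: PI_RGT_0.
    apply: lt_0_INR; apply/ssrnat.ltP; exact: k0.
  rewrite /y; have := INRQ_pos => H.
  have : Rlt (INR k) (INR Q) by apply: lt_INR; apply/ssrnat.ltP.
  move=> H2; apply Rmult_lt_reg_r with (INR Q) => //.
  have -> : Rmult (Rdiv (Rmult (INR k) PI) (INR Q)) (INR Q) = Rmult (INR k) PI.
    field; lra.
  have := PI_RGT_0; nra.
move=> H1 H2.
rewrite -R1E in H2. nra.
Qed.

Lemma zprim : Q.-primitive_root z.
Proof.
have [m pm mQ] := prim_order_exists Q0 zQ.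
have m0 := prim_order_gt0 pm.
have zm := prim_expr_order pm.
have mle : (m <= Q)%N by apply: dvdn_leq.
case: (ltnP m Q) => mQ'.
  by have := zk m; rewrite m0 mQ' zm eqxx => /(_ isT).
have -> : Q = m by apply/eqP; rewrite eqn_leq mle mQ'.
exact: pm.
Qed.


Lemma prod_1_sub : \prod_(1 <= i < Q) (1 - z ^+ i) = Q%:R.
Proof.
have F := factor_Xn_sub_1 zprim.
rewrite big_ltn // expr0 polyC1 subrX1 in F.
have H : ('X - 1 : {poly R[i]}) != 0.
  by rewrite -polyC1 polyXsubC_eq0.
have H2 := mulfI H F.
have := congr1 (fun p => p.[1]) H2.
rewrite /= horner_prod horner_sum.
under eq_bigr do rewrite hornerXsubC.
under [X in _ = X -> _]eq_bigr do rewrite hornerXn expr1n.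
move=> ->. by rewrite big_const_ord -[in RHS](card_ord Q) -sumr_const big_const_ord.
Qed.


Lemma normc_1_sub i : (0 < i < Q)%N ->
  Normc.normc (1 - z ^+ i) = Rmult (IZR 2%Z) (sin (Rdiv (Rmult PI (INR i)) (INR Q))).
Proof.
move=> /andP [i0 iQ].
set y := Rdiv (Rmult PI (INR i)) (INR Q).
have Hy : Rlt 0 (sin y).
  apply: sin_gt_0.
    rewrite /y; apply: Rdiv_lt_0_compat; last exact: INRQ_pos.
    apply: Rmult_lt_0_compat; first exact: PI_RGT_0.
    apply: lt_0_INR; apply/ssrnat.ltP; exact: i0.
  rewrite /y; have := INRQ_pos => H.
  have : Rlt (INR i) (INR Q) by apply: lt_INR; apply/ssrnat.ltP.
  move=> H2; apply Rmult_lt_reg_r with (INR Q) => //.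
  have -> : Rmult (Rdiv (Rmult PI (INR i)) (INR Q)) (INR Q) = Rmult PI (INR i).
    field; lra.
  have := PI_RGT_0; nra.
rewrite /z E_exp.
have -> : Rmult (INR i) (Rdiv (Rmult 2 PI) (INR Q)) = Rmult 2 y.
  rewrite /y; have := INRQ_pos => H; field; lra.
rewrite /E /GRing.add /GRing.opp /= /Normc.normc.
match goal with |- context [Num.sqrt ?a] =>
  have -> : a = (Rmult (IZR 2%Z) (sin y)) ^+ 2 end.
  rewrite -!RpowE -?RminusE -?RplusE -?RmultE -R1E -R0E cos_2a_sin sin_2a.
  have := sin2_cos2 y; rewrite /Rsqr => h; nra.
rewrite sqrtr_sqr ger0_norm //.
apply/RleP; rewrite -R0E; lra.
Qed.

Lemma prod_sin : \prod_(1 <= i < Q) (Rmult (IZR 2%Z) (sin (Rdiv (Rmult PI (INR i)) (INR Q)))) = Q%:R.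
Proof.
have := congr1 (@Normc.normc _) prod_1_sub.
rewrite (big_morph (@Normc.normc _) (@Normc.normcM _) (@Normc.normc1 _)).
move=> h; rewrite normcMn Normc.normc1 in h; rewrite -h.
rewrite !big_nat; apply: eq_bigr => i Hi.
by rewrite normc_1_sub.
Qed.

End Q.

Lemma prod1E f n : prod1 f n = \prod_(1 <= i < n.+1) f i.
Proof.
elim: n => [|n IH]. by rewrite big_geq. 
by rewrite big_nat_recr // -IH.
Qed.

Lemma prod_sin_id (Q : nat) : Peano.le 1 Q ->
  prod1 (fun k => Rmult (IZR 2%Z) (sin (Rdiv (Rmult PI (INR k)) (INR Q)))) (Nat.sub Q 1) = INR Q.
Proof.
move=> /leP Q0; change (Nat.sub Q 1) with (Q - 1)%N; rewrite prod1E subn1 prednK //.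
rewrite [RHS]INRE; exact: (@prod_sin Q Q0).
Qed.
End MC.


Fixpoint lsum (l : list R) : R := match l with nil => 0 | x :: l' => x + lsum l' end.
Fixpoint lprod (l : list R) : R := match l with nil => 1 | x :: l' => x * lprod l' end.

Lemma lsum_app l1 l2 : lsum (l1 ++ l2) = lsum l1 + lsum l2.
Proof. induction l1; simpl; [lra | rewrite IHl1; lra]. Qed.
Lemma lprod_app l1 l2 : lprod (l1 ++ l2) = lprod l1 * lprod l2.
Proof. induction l1; simpl; [lra | rewrite IHl1; lra]. Qed.

Lemma lsum_perm l1 l2 : Permutation l1 l2 -> lsum l1 = lsum l2.
Proof. induction 1; simpl; lra. Qed.
Lemma lprod_perm l1 l2 : Permutation l1 l2 -> lprod l1 = lprod l2.
Proof. induction 1; simpl. reflexivity. rewrite IHPermutation; reflexivity. ring. congruence. Qed.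

Lemma sum1_lsum f N : sum1 f N = lsum (map f (seq 1 N)).
Proof.
  induction N. reflexivity.
  change (sum1 f (S N)) with (sum1 f N + f (S N)).
  rewrite seq_S, map_app, lsum_app, IHN; simpl; lra.
Qed.
Lemma prod1_lprod f N : prod1 f N = lprod (map f (seq 1 N)).
Proof.
  induction N. reflexivity.
  change (prod1 f (S N)) with (prod1 f N * f (S N)).
  rewrite seq_S, map_app, lprod_app, IHN; simpl; lra.
Qed.

Lemma perm_seq (h : nat -> nat) N :
  (forall k, (1 <= k <= N)%nat -> (1 <= h k <= N)%nat) ->
  (forall k1 k2, (1 <= k1 <= N)%nat -> (1 <= k2 <= N)%nat -> h k1 = h k2 -> k1 = k2) ->
  Permutation (map h (seq 1 N)) (seq 1 N).
Proof.
  intros Hr Hi.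
  apply NoDup_Permutation_bis.
  - apply FinFun.Injective_map_NoDup_in.
    + intros x y Hx Hy. apply in_seq in Hx; apply in_seq in Hy. apply Hi; lia.
    + apply seq_NoDup.
  - rewrite length_map; lia.
  - intros x Hx. apply in_map_iff in Hx. destruct Hx as [k [<- Hk]].
    apply in_seq in Hk. apply in_seq. specialize (Hr k). lia.
Qed.

Lemma sum1_perm (h : nat -> nat) f N :
  (forall k, (1 <= k <= N)%nat -> (1 <= h k <= N)%nat) ->
  (forall k1 k2, (1 <= k1 <= N)%nat -> (1 <= k2 <= N)%nat -> h k1 = h k2 -> k1 = k2) ->
  sum1 (fun k => f (h k)) N = sum1 f N.
Proof.
  intros Hr Hi. rewrite !sum1_lsum.
  rewrite <- (map_map h f). apply lsum_perm, Permutation_map, perm_seq; auto.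
Qed.
Lemma prod1_perm (h : nat -> nat) f N :
  (forall k, (1 <= k <= N)%nat -> (1 <= h k <= N)%nat) ->
  (forall k1 k2, (1 <= k1 <= N)%nat -> (1 <= k2 <= N)%nat -> h k1 = h k2 -> k1 = k2) ->
  prod1 (fun k => f (h k)) N = prod1 f N.
Proof.
  intros Hr Hi. rewrite !prod1_lprod.
  rewrite <- (map_map h f). apply lprod_perm, Permutation_map, perm_seq; auto.
Qed.

Lemma sum1_ext f g N : (forall k, (1 <= k <= N)%nat -> f k = g k) -> sum1 f N = sum1 g N.
Proof.
  induction N; intros H; simpl; auto.
  rewrite IHN, H; [reflexivity | lia | intros; apply H; lia].
Qed.
Lemma prod1_ext f g N : (forall k, (1 <= k <= N)%nat -> f k = g k) -> prod1 f N = prod1 g N.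
Proof.
  induction N; intros H; simpl; auto.
  rewrite IHN, H; [reflexivity | lia | intros; apply H; lia].
Qed.
Lemma sum1_plus f g N : sum1 (fun k => f k + g k) N = sum1 f N + sum1 g N.
Proof. induction N; simpl; [lra | rewrite IHN; lra]. Qed.
Lemma sum1_minus f g N : sum1 (fun k => f k - g k) N = sum1 f N - sum1 g N.
Proof. induction N; simpl; [lra | rewrite IHN; lra]. Qed.
Lemma sum1_scal c f N : sum1 (fun k => c * f k) N = c * sum1 f N.
Proof. induction N; simpl; [lra | rewrite IHN; lra]. Qed.
Lemma sum1_const c N : sum1 (fun _ => c) N = INR N * c.
Proof. induction N; simpl sum1; [simpl; lra | rewrite IHN, S_INR; lra]. Qed.
Lemma sum1_le f g N : (forall k, (1 <= k <= N)%nat -> f k <= g k) -> sum1 f N <= sum1 g N.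
Proof.
  induction N; intros H; simpl; [lra|].
  assert (sum1 f N <= sum1 g N) by (apply IHN; intros; apply H; lia).
  assert (f (S N) <= g (S N)) by (apply H; lia). lra.
Qed.
Lemma sum1_abs f N : Rabs (sum1 f N) <= sum1 (fun k => Rabs (f k)) N.
Proof.
  induction N; simpl. rewrite Rabs_R0; lra.
  eapply Rle_trans. apply Rabs_triang. lra.
Qed.
Lemma sum1_abs_le f g N : (forall k, (1 <= k <= N)%nat -> Rabs (f k) <= g k) ->
  Rabs (sum1 f N) <= sum1 g N.
Proof. intros H. eapply Rle_trans. apply sum1_abs. apply sum1_le; auto. Qed.
Lemma sum1_split f a b : sum1 f (a + b) = sum1 f a + sum1 (fun t => f (a + t)%nat) b.
Proof.
  induction b; simpl. rewrite Nat.add_0_r; lra.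
  rewrite Nat.add_succ_r; simpl; rewrite IHb; lra.
Qed.
Lemma rev_seq1 N : rev (seq 1 N) = map (fun k => (N + 1 - k)%nat) (seq 1 N).
Proof.
  induction N. reflexivity.
  change (seq 1 (S N)) with (1%nat :: seq 2 N) at 1.
  rewrite <- (seq_shift N 1). cbn [rev]. rewrite <- map_rev, IHN, map_map.
  rewrite seq_S, map_app. simpl. f_equal.
  - apply map_ext_in. intros a Ha; apply in_seq in Ha. destruct a; lia.
  - f_equal. lia.
Qed.
Lemma sum1_rev f N : sum1 f N = sum1 (fun k => f (N + 1 - k)%nat) N.
Proof.
  rewrite !sum1_lsum.
  apply lsum_perm.
  replace (map (fun k => f (N + 1 - k)%nat) (seq 1 N)) with (rev (map f (seq 1 N))).
  apply Permutation_rev.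
  rewrite <- map_rev, rev_seq1, map_map. reflexivity.
Qed.
Lemma prod1_pos f N : (forall k, (1 <= k <= N)%nat -> 0 < f k) -> 0 < prod1 f N.
Proof.
  induction N; intros H; simpl; [lra|].
  apply Rmult_lt_0_compat; [apply IHN; intros; apply H; lia | apply H; lia].
Qed.
Lemma ln_prod1 f N : (forall k, (1 <= k <= N)%nat -> 0 < f k) ->
  ln (prod1 f N) = sum1 (fun k => ln (f k)) N.
Proof.
  induction N; intros H; simpl. apply ln_1.
  rewrite ln_mult, IHN; auto. intros; apply H; lia.
  apply prod1_pos; intros; apply H; lia. apply H; lia.
Qed.


Fixpoint ppair (alpha : R) (n : nat) : nat * nat :=
  match n with
  | O => (1%nat, 0%nat)
  | S m => let (u, v) := ppair alpha m in (v, (a alpha (S m) * v + u)%nat)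
  end.
Definition pp (alpha : R) (n : nat) : nat := fst (ppair alpha n).

Section CF.
Variable alpha : R.
Notation x := (gx alpha).
Notation q := (q alpha).
Notation p := (pp alpha).
Notation a := (a alpha).

Lemma q0 : q 0 = 0%nat. Proof. reflexivity. Qed.
Lemma q1 : q 1 = 1%nat. Proof. reflexivity. Qed.
Lemma p0 : p 0 = 1%nat. Proof. reflexivity. Qed.
Lemma p1 : p 1 = 0%nat. Proof. reflexivity. Qed.

Lemma q_SS m : q (S (S m)) = (a (S m) * q (S m) + q m)%nat.
Proof.
  unfold Defs.q. simpl qpair. destruct (qpair alpha m) as [u v]. simpl. reflexivity.
Qed.
Lemma p_SS m : p (S (S m)) = (a (S m) * p (S m) + p m)%nat.
Proof.
  unfold pp. simpl ppair. destruct (ppair alpha m) as [u v]. simpl. reflexivity.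
Qed.

Lemma Int_part_ge1 r : 1 <= r -> (1 <= Int_part r)%Z.
Proof.
  intros H. destruct (base_Int_part r) as [H1 H2].
  assert (0 < IZR (Int_part r)) by lra. apply lt_IZR in H0. lia.
Qed.

Lemma gx_S j : 0 < x j < 1 ->
  x (S j) = / x j - INR (a (S j)) /\ (1 <= a (S j))%nat.
Proof.
  intros [H1 H2].
  assert (Hi : 1 <= / x j). { rewrite <- Rinv_1. apply Rinv_le_contravar; lra. }
  pose proof (Int_part_ge1 _ Hi) as HI.
  unfold Defs.a. simpl gx. unfold frac, frac_part.
  rewrite INR_IZR_INZ, Z2Nat.id by lia. split. reflexivity. lia.
Qed.

Lemma q_ge1 m : (forall i, (i < m)%nat -> (1 <= a (S i))%nat) -> (1 <= q (S m))%nat.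
Proof.
  induction m; intros H. rewrite q1; lia.
  rewrite q_SS. pose proof (H m ltac:(lia)) as Hm.
  assert (1 <= q (S m))%nat by (apply IHm; intros; apply H; lia).
  nia.
Qed.

Lemma det m : (Z.of_nat (q (S m)) * Z.of_nat (p m) - Z.of_nat (p (S m)) * Z.of_nat (q m) = (-1)^(Z.of_nat m))%Z.
Proof.
  induction m. reflexivity.
  rewrite q_SS, p_SS, !Nat2Z.inj_add, !Nat2Z.inj_mul, Nat2Z.inj_succ.
  rewrite Z.pow_succ_r by lia. rewrite <- IHm. ring.
Qed.

Lemma cf_formula j : (forall i, (i < j)%nat -> 0 < x i < 1) ->
  alpha * (INR (q (S j)) + INR (q j) * x j) = INR (p (S j)) + INR (p j) * x j.
Proof.
  induction j; intros H.
  - rewrite q1, q0, p1, p0. simpl. lra.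
  - destruct (gx_S j (H j ltac:(lia))) as [Hx Ha].
    assert (Hj : 0 < x j < 1) by (apply H; lia).
    rewrite q_SS, p_SS, !plus_INR, !mult_INR, Hx.
    assert (IH := IHj (fun i Hi => H i ltac:(lia))).
    set (A := INR (a (S j))) in *.
    apply Rmult_eq_reg_r with (x j); [|lra].
    replace (alpha * (A * INR (q (S j)) + INR (q j) + INR (q (S j)) * (/ x j - A)) * x j)
      with (alpha * (INR (q (S j)) + INR (q j) * x j)) by (field; lra).
    rewrite IH. field. lra.
Qed.

Definition irr_ok := 0 < alpha < 1 /\ irrational alpha.

Lemma x_bounds : irr_ok -> forall j, 0 < x j < 1.
Proof.
  intros [Ha Hirr].
  assert (forall j i, (i <= j)%nat -> 0 < x i < 1); [|intros j; apply (H j); lia].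
  induction j; intros i Hi.
  - replace i with 0%nat by lia. simpl. exact Ha.
  - destruct (Nat.eq_dec i (S j)) as [->|Hne]; [|apply IHj; lia].
    assert (Hj : 0 < x j < 1) by (apply IHj; lia).
    assert (Hfr : 0 <= x (S j) < 1).
    { simpl gx. unfold frac. destruct (base_fp (/ x j)). lra. }
    destruct (Req_dec (x (S j)) 0) as [H0|H0]; [|lra].
    exfalso. apply Hirr.
    assert (F := cf_formula (S j) (fun i Hi0 => IHj i ltac:(lia))).
    rewrite H0 in F.
    assert (Hq : (1 <= q (S (S j)))%nat).
    { apply q_ge1. intros i0 Hi0. apply (gx_S i0). apply IHj; lia. }
    exists (Z.of_nat (p (S (S j)))), (Z.of_nat (q (S (S j)))). split. lia.
    rewrite <- !INR_IZR_INZ. apply le_INR in Hq. simpl in Hq.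
    apply Rmult_eq_reg_r with (INR (q (S (S j)))); [|lra].
    field_simplify; [|lra]. lra.
Qed.

End CF.


Section Mod.
Variables (Q Q' P P' : nat) (eZ : Z).
Hypothesis He : eZ = 1%Z \/ eZ = (-1)%Z.
Hypothesis Hdet : (Z.of_nat Q * Z.of_nat P' - Z.of_nat P * Z.of_nat Q' = eZ)%Z.
Hypothesis HQ' : (1 <= Q' < Q)%nat.

Definition rr (k : nat) : nat := ((k * Q') mod Q)%nat.

Lemma rr_eq k : exists t : Z, (Z.of_nat (rr k) = Z.of_nat k * Z.of_nat Q' - Z.of_nat Q * t)%Z /\ (0 <= Z.of_nat (rr k) < Z.of_nat Q)%Z.
Proof.
  unfold rr. exists (Z.of_nat (k * Q' / Q)).
  pose proof (Nat.div_mod_eq (k * Q') Q).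
  pose proof (Nat.mod_upper_bound (k * Q') Q ltac:(lia)).
  split; [|lia].
  apply (f_equal Z.of_nat) in H. rewrite Nat2Z.inj_add, !Nat2Z.inj_mul in H. lia.
Qed.

Lemma rr_cong k : exists mz : Z, (Z.of_nat (rr k) * Z.of_nat P = Z.of_nat Q * mz - eZ * Z.of_nat k)%Z.
Proof.
  destruct (rr_eq k) as [t [Ht _]].
  exists (Z.of_nat k * Z.of_nat P' - Z.of_nat P * t)%Z.
  rewrite Ht, <- Hdet. ring.
Qed.

Lemma rr_range k : (1 <= k <= Q - 1)%nat -> (1 <= rr k <= Q - 1)%nat.
Proof.
  intros Hk. destruct (rr_eq k) as [t [Ht Hb]].
  destruct (rr_cong k) as [mz Hm].
  assert (rr k <> 0%nat).
  { intros H0. rewrite H0 in Hm. change (Z.of_nat 0) with 0%Z in Hm.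
    assert (Hk' : (1 <= Z.of_nat k <= Z.of_nat Q - 1)%Z) by lia.
    assert (HQm : (Z.of_nat Q * mz <= - Z.of_nat Q \/ Z.of_nat Q * mz = 0 \/ Z.of_nat Q <= Z.of_nat Q * mz)%Z).
    { destruct (Z_le_gt_dec mz (-1)); [left; nia|].
      destruct (Z_le_gt_dec mz 0); [right; left; replace mz with 0%Z by lia; ring| right; right; nia]. }
    destruct He as [-> | ->]; lia. }
  lia.
Qed.

Lemma rr_inj k1 k2 : (1 <= k1 <= Q - 1)%nat -> (1 <= k2 <= Q - 1)%nat -> rr k1 = rr k2 -> k1 = k2.
Proof.
  intros H1 H2 H.
  destruct (rr_cong k1) as [m1 Hm1]. destruct (rr_cong k2) as [m2 Hm2].
  rewrite H in Hm1.
  assert (eZ * (Z.of_nat k1 - Z.of_nat k2) = Z.of_nat Q * (m1 - m2))%Z by lia.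
  assert (Hk' : (- Z.of_nat Q < Z.of_nat k1 - Z.of_nat k2 < Z.of_nat Q)%Z) by lia.
  assert (HQm : (Z.of_nat Q * (m1 - m2) <= - Z.of_nat Q \/ (m1 - m2) = 0 \/ Z.of_nat Q <= Z.of_nat Q * (m1 - m2))%Z).
  { destruct (Z_le_gt_dec (m1 - m2) (-1)); [left; nia|].
    destruct (Z_le_gt_dec (m1 - m2) 0); [right; left; lia| right; right; nia]. }
  destruct HQm as [HQm|[HQm|HQm]]; [| rewrite HQm in H0 |]; destruct He as [-> | ->]; lia.
Qed.

Lemma rr_rev k : (1 <= k <= Q - 1)%nat -> rr (Q - k) = (Q - rr k)%nat.
Proof.
  intros Hk. pose proof (rr_range k Hk). pose proof (rr_range (Q - k) ltac:(lia)).
  destruct (rr_eq k) as [t1 [Ht1 _]]. destruct (rr_eq (Q - k)) as [t2 [Ht2 _]].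
  rewrite Nat2Z.inj_sub in Ht2 by lia.
  assert (Z.of_nat (rr k) + Z.of_nat (rr (Q - k)) = Z.of_nat Q * (Z.of_nat Q' - t1 - t2))%Z by nia.
  assert (Z.of_nat Q' - t1 - t2 = 1)%Z by nia.
  lia.
Qed.

Lemma rr_1 : rr 1 = Q'.
Proof. unfold rr. rewrite Nat.mul_1_l. apply Nat.mod_small. lia. Qed.

End Mod.

Lemma PI_bounds : 3 <= PI <= 4.
Proof. split; [| apply PI_4]. pose proof PI2_3_2. lra. Qed.

Lemma Rabs_le2 x r : Rabs x <= r -> - r <= x <= r.
Proof. unfold Rabs; destruct (Rcase_abs x); lra. Qed.

Lemma sin_lb1 t : 0 <= t <= PI -> t - t^3/6 <= sin t.
Proof.
  intros H. destruct (sin_bound t 0 (proj1 H) (proj2 H)) as [H1 _].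
  unfold sin_approx, sin_term in H1. simpl in H1. lra.
Qed.
Lemma sin_ub1 t : 0 <= t -> sin t <= t.
Proof.
  intros H. destruct (Req_dec t 0) as [->|]. rewrite sin_0; lra.
  left; apply sin_lt_x; lra.
Qed.
Lemma cos_b t : - PI / 2 <= t <= PI / 2 -> 1 - t^2/2 <= cos t <= 1 - t^2/2 + t^4/24.
Proof.
  intros H. destruct (cos_bound t 0 (proj1 H) (proj2 H)) as [H1 H2].
  unfold cos_approx, cos_term in H1, H2. simpl in H1, H2. lra.
Qed.

Lemma sin_lin y : 0 <= y <= 2 -> y / 3 <= sin y.
Proof.
  intros H. pose proof PI_bounds. pose proof (sin_lb1 y ltac:(lra)). nra.
Qed.

Lemma ln_bounds r : 0 < r -> 1 - / r <= ln r <= r - 1.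
Proof.
  intros H. split.
  - pose proof (exp_ineq1_le (ln (/ r))).
    rewrite exp_ln in H0 by (apply Rinv_0_lt_compat; lra).
    rewrite ln_Rinv in H0 by lra. lra.
  - pose proof (exp_ineq1_le (ln r)). rewrite exp_ln in H0 by lra. lra.
Qed.

Lemma cot_near y : 0 < y <= PI / 2 -> 1 / y - 1 <= cos y / sin y <= 1 / y.
Proof.
  intros H. pose proof PI_bounds.
  pose proof (cos_b y ltac:(lra)) as [Hc1 Hc2].
  pose proof (sin_lb1 y ltac:(lra)). pose proof (sin_ub1 y ltac:(lra)).
  assert (Hs : 0 < sin y) by (apply sin_gt_0; lra).
  assert (Hcos : 0 <= cos y) by (apply cos_ge_0; lra).
  split.
  - apply Rmult_le_reg_r with (y * sin y). nra.
    replace (cos y / sin y * (y * sin y)) with (y * cos y) by (field; lra).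
    replace ((1 / y - 1) * (y * sin y)) with (sin y * (1 - y)) by (field; lra).
    destruct (Rle_dec 1 y). nra. nra.
  - apply Rmult_le_reg_r with (y * sin y). nra.
    replace (cos y / sin y * (y * sin y)) with (y * cos y) by (field; lra).
    replace (1 / y * (y * sin y)) with (sin y) by (field; lra).
    nra.
Qed.

Lemma cot_approx y : 0 < y < PI -> Rabs (cos y / sin y - (1 / y - 1 / (PI - y))) <= 2.
Proof.
  intros H. pose proof PI_bounds.
  destruct (Rle_dec y (PI / 2)).
  - pose proof (cot_near y ltac:(lra)).
    assert (0 < 1 / (PI - y) <= 1).
    { split. apply Rdiv_lt_0_compat; lra.
      apply Rmult_le_reg_r with (PI - y). lra. unfold Rdiv. rewrite Rmult_assoc, Rinv_l; lra. }
    apply Rabs_le; lra.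
  - set (y' := PI - y).
    pose proof (cot_near y' ltac:(unfold y'; lra)).
    assert (Hc : cos y / sin y = - (cos y' / sin y')).
    { unfold y'. rewrite sin_PI_x. rewrite cos_minus, cos_PI, sin_PI. field.
      apply Rgt_not_eq, sin_gt_0; lra. }
    assert (0 < 1 / y <= 1).
    { split. apply Rdiv_lt_0_compat; lra.
      apply Rmult_le_reg_r with y. lra. unfold Rdiv. rewrite Rmult_assoc, Rinv_l; lra. }
    rewrite Hc. fold y'. apply Rabs_le; lra.
Qed.

Lemma sin_half y h : 0 < y < PI -> y / 2 <= y + h <= y -> sin y / 2 <= sin (y + h).
Proof.
  intros H1 H2. pose proof PI_bounds.
  assert (Hs2 : sin y <= 2 * sin (y / 2)).
  { replace y with (2 * (y / 2)) at 1 by field. rewrite sin_2a.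
    assert (0 <= sin (y/2)) by (apply sin_ge_0; lra).
    assert (cos (y/2) <= 1) by apply COS_bound. nra. }
  destruct (Rle_dec (y + h) (PI / 2)).
  - assert (sin (y/2) <= sin (y + h)) by (apply sin_incr_1; lra). lra.
  - assert (sin y <= sin (y + h)) by (apply sin_decr_1; lra).
    assert (0 <= sin y) by (apply sin_ge_0; lra). lra.
Qed.

Lemma lnrho y h d B : 0 < y < PI -> - d <= h <= 0 -> 0 <= d <= 3/2 -> y / 2 <= y + h ->
  d <= B * sin y -> 0 <= B <= 6 ->
  Rabs (ln (sin (y + h) / sin y) - h * (cos y / sin y)) <= 4 * B^2 + 40 * d^2.
Proof.
  intros Hy Hh Hd Hyh HB HB6. pose proof PI_bounds.
  assert (Hs : 0 < sin y) by (apply sin_gt_0; lra).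
  set (s := sin y) in *. set (C := cos y / s).
  set (t := - h).
  assert (Hct : 1 - t^2/2 <= cos t <= 1).
  { pose proof (cos_b t ltac:(unfold t; lra)). split. lra. apply COS_bound. }
  assert (Hst : t - t^3/6 <= sin t <= t).
  { split. apply sin_lb1; unfold t; lra. apply sin_ub1; unfold t; lra. }
  assert (HC : Rabs C * s <= 1).
  { unfold C. unfold Rdiv. rewrite Rabs_mult, Rabs_inv, (Rabs_pos_eq s) by lra.
    rewrite Rmult_assoc, Rinv_l by lra. rewrite Rmult_1_r. apply Rabs_le. split.
    pose proof (COS_bound y). lra. apply COS_bound. }
  assert (Hrho : sin (y + h) / s = cos t - sin t * C).
  { rewrite sin_plus. unfold t, C. rewrite cos_neg, sin_neg. fold s. field. lra. }
  assert (Hhalf : s / 2 <= sin (y + h)) by (apply sin_half; lra).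
  set (rho := sin (y + h) / s) in *.
  assert (Hrho2 : 1 / 2 <= rho).
  { unfold rho. apply Rmult_le_reg_r with s. lra.
    replace (sin (y + h) / s * s) with (sin (y + h)) by (field; lra). lra. }
  assert (Hht : 0 <= t <= d) by (unfold t; lra).
  assert (HtC : Rabs (t * C) <= B).
  { rewrite Rabs_mult, Rabs_pos_eq by lra.
    apply Rmult_le_reg_r with s. lra.
    assert (H0 : 0 <= Rabs C * s) by (apply Rmult_le_pos; [apply Rabs_pos | lra]).
    assert (t * (Rabs C * s) <= d * 1) by (apply Rmult_le_compat; lra).
    rewrite Rmult_assoc. lra. }
  assert (Hsc : Rabs ((t - sin t) * C) <= d^2).
  { rewrite Rabs_mult. rewrite (Rabs_pos_eq (t - sin t)) by lra.
    rewrite Rabs_mult, Rabs_pos_eq in HtC by lra.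
    assert (t - sin t <= t^3/6) by lra.
    pose proof (Rabs_pos C).
    assert ((t - sin t) * Rabs C <= t^3/6 * Rabs C) by nra.
    assert (t^3/6 * Rabs C = t^2/6 * (t * Rabs C)) by (unfold Rdiv; ring).
    assert (t^2 <= d^2) by nra.
    assert (t^2/6 * (t * Rabs C) <= d^2/6 * B) by (apply Rmult_le_compat; nra).
    nra. }
  assert (Hr1 : Rabs (rho - 1 - h * C) <= 3/2 * d^2).
  { rewrite Hrho. unfold t in *.
    replace (cos (- h) - sin (- h) * C - 1 - h * C) with ((cos (-h) - 1) + ((- h) - sin (-h)) * C) by ring.
    eapply Rle_trans. apply Rabs_triang.
    assert (Rabs (cos (- h) - 1) <= d^2/2).
    { rewrite Rabs_left1 by lra. assert ((-h)^2 <= d^2) by nra. lra. }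
    lra. }
  assert (HhC : Rabs (h * C) <= B).
  { replace (h * C) with (- (t * C)) by (unfold t; ring). rewrite Rabs_Ropp. exact HtC. }
  assert (Hr2 : Rabs (rho - 1) <= B + 3/2 * d^2).
  { replace (rho - 1) with ((rho - 1 - h * C) + h * C) by ring.
    eapply Rle_trans. apply Rabs_triang. lra. }
  pose proof (ln_bounds rho ltac:(lra)) as [Hl1 Hl2].
  assert (Hl3 : rho - 1 - ln rho <= 2 * (rho - 1)^2).
  { assert (rho - 1 - (1 - / rho) = (rho - 1)^2 / rho) by (field; lra).
    assert ((rho - 1)^2 / rho <= 2 * (rho - 1)^2).
    { apply Rmult_le_reg_r with rho. lra.
      replace ((rho - 1)^2 / rho * rho) with ((rho - 1)^2) by (field; lra).
      assert (0 <= (rho - 1)^2) by apply pow2_ge_0. assert (0 <= (rho - 1)^2 * (2 * rho - 1)) by (apply Rmult_le_pos; lra). nra. }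
    lra. }
  assert (Hsq : (rho - 1)^2 <= 2 * B^2 + 11 * d^2).
  { assert (0 <= Rabs (rho - 1)) by apply Rabs_pos.
    assert ((rho - 1)^2 = Rabs (rho - 1) ^2) by (rewrite pow2_abs; ring).
    assert (Rabs (rho - 1) ^2 <= (B + 3/2 * d^2)^2) by (apply pow_incr; lra).
    assert (d^2 <= 9/4) by nra.
    assert ((B + 3/2 * d^2)^2 <= 2 * B^2 + 2 * (3/2 * d^2)^2) by (pose proof (pow2_ge_0 (B - 3/2 * d^2)); nra).
    assert (d^2 * d^2 <= 9/4 * d^2) by (pose proof (pow2_ge_0 d); nra).
    nra. }
  apply Rabs_le. apply Rabs_le2 in Hr1. split; nra.
Qed.


Lemma sin_shift_Z w m : Rabs (sin (w + IZR m * PI)) = Rabs (sin w).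
Proof.
  rewrite sin_plus.
  rewrite (sin_eq_0_1 (IZR m * PI)) by (exists m; reflexivity).
  assert (Hc : Rabs (cos (IZR m * PI)) = 1).
  { pose proof (sin2_cos2 (IZR m * PI)) as H.
    rewrite (sin_eq_0_1 (IZR m * PI)) in H by (exists m; reflexivity).
    unfold Rsqr in H. rewrite Rmult_0_l, Rplus_0_l in H.
    assert (Rabs (cos (IZR m * PI)) * Rabs (cos (IZR m * PI)) = 1) by (rewrite <- Rabs_mult; rewrite H; apply Rabs_R1).
    pose proof (Rabs_pos (cos (IZR m * PI))). nra. }
  rewrite Rmult_0_r, Rplus_0_r, Rabs_mult, Hc. ring.
Qed.

Lemma Int_part_spec z r : IZR z <= r < IZR z + 1 -> Int_part r = z.
Proof.
  intros H. unfold Int_part.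
  assert (up r = (z + 1)%Z).
  { symmetry. apply tech_up; rewrite plus_IZR; simpl; lra. }
  rewrite H0. ring.
Qed.

Lemma frac_nat a b : (0 < b)%nat -> frac (INR a / INR b) = INR (a mod b) / INR b.
Proof.
  intros Hb. unfold frac, frac_part.
  assert (Hb' : 0 < INR b) by (apply lt_0_INR; lia).
  pose proof (Nat.div_mod_eq a b) as Hd.
  pose proof (Nat.mod_upper_bound a b ltac:(lia)) as Hm.
  assert (HaR : INR a = INR b * INR (a / b) + INR (a mod b)).
  { rewrite <- mult_INR, <- plus_INR. f_equal. exact Hd. }
  rewrite (Int_part_spec (Z.of_nat (a / b))).
  - rewrite <- INR_IZR_INZ, HaR. field. lra.
  - rewrite <- INR_IZR_INZ, HaR.
    assert (INR (a mod b) < INR b) by (apply lt_INR; lia).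
    assert (0 <= INR (a mod b)) by apply pos_INR.
    split.
    + apply Rmult_le_reg_r with (INR b); [lra|].
      replace ((INR b * INR (a / b) + INR (a mod b)) / INR b * INR b) with (INR b * INR (a / b) + INR (a mod b)) by (field; lra).
      lra.
    + apply Rmult_lt_reg_r with (INR b); [lra|].
      replace ((INR b * INR (a / b) + INR (a mod b)) / INR b * INR b) with (INR b * INR (a / b) + INR (a mod b)) by (field; lra).
      lra.
Qed.

Lemma sum_inv_sq N : sum1 (fun k => / (INR k * INR k)) N <= 2 - 2 / (INR N + 1).
Proof.
  induction N. simpl. lra.
  change (sum1 (fun k => / (INR k * INR k)) (S N)) with
    (sum1 (fun k => / (INR k * INR k)) N + / (INR (S N) * INR (S N))).
  rewrite S_INR.
  assert (0 <= INR N) by apply pos_INR.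
  assert (2 / (INR N + 1) - 2 / (INR N + 1 + 1) - / ((INR N + 1) * (INR N + 1)) = INR N / ((INR N + 1) * (INR N + 1) * (INR N + 2))) by (field; lra).
  assert (0 <= INR N / ((INR N + 1) * (INR N + 1) * (INR N + 2))).
  { apply Rmult_le_pos. lra. left. apply Rinv_0_lt_compat. apply Rmult_lt_0_compat; [nra|lra]. }
  lra.
Qed.

Lemma abel g N : sum1 (fun k => g k / INR k) (S N) =
  sum1 g (S N) / INR (S N) + sum1 (fun t => sum1 g t / (INR t * INR (t + 1))) N.
Proof.
  induction N.
  - simpl. field.
  - change (sum1 (fun k => g k / INR k) (S (S N))) with (sum1 (fun k => g k / INR k) (S N) + g (S (S N)) / INR (S (S N))).
    rewrite IHN.
    change (sum1 g (S (S N))) with (sum1 g (S N) + g (S (S N))).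
    change (sum1 (fun t => sum1 g t / (INR t * INR (t + 1))) (S N)) with
      (sum1 (fun t => sum1 g t / (INR t * INR (t + 1))) N + sum1 g (S N) / (INR (S N) * INR (S N + 1))).
    replace (S N + 1)%nat with (S (S N)) by lia.
    rewrite !S_INR. assert (0 <= INR N) by apply pos_INR. field. lra.
Qed.

Lemma frac_half_bound r : Rabs (frac r - / 2) <= / 2.
Proof. unfold frac. destruct (base_fp r). apply Rabs_le. lra. Qed.

Lemma D_bound t b : Rabs (D t b) <= INR t / 2.
Proof.
  unfold D. eapply Rle_trans. apply sum1_abs_le with (g := fun _ => / 2).
  intros; apply frac_half_bound. rewrite sum1_const. lra.
Qed.


Lemma pm1 m : ((-1)^(Z.of_nat m) = 1 \/ (-1)^(Z.of_nat m) = -1)%Z.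
Proof.
  induction m. left; reflexivity.
  rewrite Nat2Z.inj_succ, Z.pow_succ_r by lia. destruct IHm as [-> | ->]; [right|left]; reflexivity.
Qed.

Section Main.
Variable alpha : R.
Hypothesis Hok : irr_ok alpha.
Variable n : nat.
Hypothesis Hn : (4 <= n)%nat.

Let j := (n - 1)%nat.
Let Q := q alpha n.
Let Q' := q alpha j.
Let P := pp alpha n.
Let P' := pp alpha j.
Let y0 := gx alpha j.
Let cc := c alpha n.
Let eZ := ((-1)^(Z.of_nat j))%Z.
Let e := IZR eZ.
Let beta := alpha_minus alpha n.

Lemma nj : n = S j.
Proof. unfold j; lia. Qed.

Lemma Hx i : 0 < gx alpha i < 1.
Proof. apply x_bounds; exact Hok. Qed.

Lemma Ha i : (1 <= a alpha (S i))%nat.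
Proof. apply (gx_S alpha i (Hx i)). Qed.

Lemma HQs : (1 <= Q')%nat /\ (Q' < Q)%nat /\ (3 <= Q)%nat.
Proof.
  unfold Q, Q', j. destruct n as [|[|[|[|m]]]]; try lia.
  replace (S (S (S (S m))) - 1)%nat with (S (S (S m))) by lia.
  pose proof (q_SS alpha (S (S m))) as E1. pose proof (q_SS alpha (S m)) as E2.
  assert (H1 : (1 <= q alpha (S (S m)))%nat) by (apply q_ge1; intros; apply Ha).
  assert (H2 : (1 <= q alpha (S m))%nat) by (apply q_ge1; intros; apply Ha).
  pose proof (Ha (S (S m))). pose proof (Ha (S m)).
  set (A1 := a alpha (S (S (S m)))) in *. set (A2 := a alpha (S (S m))) in *.
  set (B1 := q alpha (S (S m))) in *. set (B2 := q alpha (S m)) in *. nia.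
Qed.

Lemma He : e = 1 \/ e = -1.
Proof. unfold e, eZ. destruct (pm1 j) as [-> | ->]; [left|right]; reflexivity. Qed.

Lemma HeZ : eZ = 1%Z \/ eZ = (-1)%Z.
Proof. unfold eZ. apply pm1. Qed.

Lemma Hdet : (Z.of_nat Q * Z.of_nat P' - Z.of_nat P * Z.of_nat Q' = eZ)%Z.
Proof. unfold Q, P', P, Q', eZ. rewrite nj. apply det. Qed.

Lemma HdetR : INR Q * INR P' - INR P * INR Q' = e.
Proof.
  unfold e. rewrite <- Hdet. rewrite minus_IZR, !mult_IZR, <- !INR_IZR_INZ. reflexivity.
Qed.

Lemma Hcdef : cc = / (/ y0 + INR Q' / INR Q).
Proof. unfold cc, c, alpha_plus, alpha_minus. fold j. reflexivity. Qed.

Lemma Hbeta : beta = INR Q' / INR Q.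
Proof. unfold beta, alpha_minus. fold j. reflexivity. Qed.

Lemma HQR : 3 <= INR Q /\ 1 <= INR Q' /\ INR Q' + 1 <= INR Q.
Proof.
  destruct HQs as [H1 [H2 H3]].
  split; [|split]. replace 3 with (INR 3) by (simpl; lra). apply le_INR; lia.
  replace 1 with (INR 1) by reflexivity. apply le_INR; lia.
  rewrite <- S_INR. apply le_INR; lia.
Qed.

Lemma Hc : 0 < cc < 1 /\ cc * (INR Q' / INR Q) <= 1 / 2.
Proof.
  rewrite Hcdef. destruct HQR as [H1 [H2 H3]]. pose proof (Hx j) as Hy. fold y0 in Hy.
  assert (Hi : 1 < / y0). { rewrite <- Rinv_1. apply Rinv_lt_contravar; lra. }
  assert (Hb : 0 < INR Q' / INR Q <= 1).
  { split. apply Rdiv_lt_0_compat; lra.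
    apply Rmult_le_reg_r with (INR Q). lra. unfold Rdiv. rewrite Rmult_assoc, Rinv_l; lra. }
  set (b := INR Q' / INR Q) in *. clearbody b.
  split. split. apply Rinv_0_lt_compat; lra.
  rewrite <- Rinv_1. apply Rinv_lt_contravar; lra.
  apply Rmult_le_reg_r with (/ y0 + b). lra.
  set (iy := / y0) in *. clearbody iy. replace (/ (iy + b) * b * (iy + b)) with b by (field; lra). lra.
Qed.

Lemma Halpha : alpha * INR Q = INR P + e * cc / INR Q.
Proof.
  pose proof (cf_formula alpha j (fun i _ => Hx i)) as F.
  rewrite <- nj in F. fold Q Q' P P' y0 in F.
  rewrite <- HdetR, Hcdef.
  destruct HQR as [H1 [H2 H3]]. pose proof (Hx j) as Hy. fold y0 in Hy.
  assert (Hd : 0 < INR Q + INR Q' * y0) by nra.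
  assert (Ha' : alpha = (INR P + INR P' * y0) / (INR Q + INR Q' * y0)).
  { apply Rmult_eq_reg_r with (INR Q + INR Q' * y0). rewrite F. field. lra. lra. }
  rewrite Ha'. field. repeat split; lra.
Qed.

Let r k := rr Q Q' k.
Let u k := INR (r k) / INR Q.
Let yk k := PI * INR k / INR Q.
Let hk k := - (PI * cc * u k / INR Q).

Lemma HQ'b : (1 <= Q' < Q)%nat.
Proof. destruct HQs as [H1 [H2 H3]]. lia. Qed.

Lemma Hr_range k : (1 <= k <= Q - 1)%nat -> (1 <= r k <= Q - 1)%nat.
Proof. apply (rr_range Q Q' P P' eZ HeZ Hdet HQ'b). Qed.

Lemma Hr_inj k1 k2 : (1 <= k1 <= Q - 1)%nat -> (1 <= k2 <= Q - 1)%nat -> r k1 = r k2 -> k1 = k2.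
Proof. apply (rr_inj Q Q' P P' eZ HeZ Hdet HQ'b). Qed.

Lemma Hu k : (1 <= k <= Q - 1)%nat -> 0 < u k < 1.
Proof.
  intros Hk. pose proof (Hr_range k Hk). destruct HQR as [H1 _]. unfold u.
  assert (1 <= INR (r k)) by (replace 1 with (INR 1) by reflexivity; apply le_INR; lia).
  assert (INR (r k) + 1 <= INR Q) by (rewrite <- S_INR; apply le_INR; lia).
  split. apply Rdiv_lt_0_compat; lra.
  apply Rmult_lt_reg_r with (INR Q). lra.
  replace (INR (r k) / INR Q * INR Q) with (INR (r k)) by (field; lra). lra.
Qed.

Lemma Hz k : (1 <= k <= Q - 1)%nat ->
  yk k / 2 <= yk k + hk k <= yk k /\ - (PI / INR Q) <= hk k <= 0 /\ 0 < yk k < PI.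
Proof.
  intros Hk. pose proof (Hu k Hk) as [Hu1 Hu2]. destruct Hc as [[Hc1 Hc2] Hc3].
  destruct HQR as [H1 _]. pose proof PI_bounds.
  assert (HkR : 1 <= INR k) by (replace 1 with (INR 1) by reflexivity; apply le_INR; lia).
  assert (HkQ : INR k + 1 <= INR Q) by (rewrite <- S_INR; apply le_INR; lia).
  assert (Hcu : cc * u k <= INR k / 2).
  { destruct (Nat.eq_dec k 1) as [->|Hk1].
    - unfold u, r. rewrite (rr_1 Q Q' P P' HQ'b). simpl INR. lra.
    - assert (2 <= INR k) by (replace 2 with (INR 2) by reflexivity; apply le_INR; lia).
      assert (cc * u k < 1) by nra. lra. }
  assert (HPQ : 0 < PI / INR Q) by (apply Rdiv_lt_0_compat; lra).
  unfold yk, hk.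
  replace (PI * INR k / INR Q) with (PI / INR Q * INR k) by (field; lra).
  replace (PI * cc * u k / INR Q) with (PI / INR Q * (cc * u k)) by (field; lra).
  assert (0 <= cc * u k <= 1) by (split; nra).
  split; [|split]; [split| split |split].
  - nra.
  - nra.
  - nra.
  - nra.
  - nra.
  - apply Rmult_lt_reg_r with (INR Q). lra.
    replace (PI / INR Q * INR k * INR Q) with (PI * INR k) by (field; lra). nra.
Qed.

Lemma Hterm k : (1 <= k <= Q - 1)%nat ->
  Rabs (2 * sin (PI * INR (r k) * alpha)) = 2 * sin (yk k + hk k).
Proof.
  intros Hk. destruct (rr_cong Q Q' P P' eZ HeZ Hdet HQ'b k) as [mz Hm]. fold (r k) in Hm.
  assert (HmR : INR (r k) * INR P = INR Q * IZR mz - e * INR k).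
  { unfold e. rewrite !INR_IZR_INZ, <- !mult_IZR, <- minus_IZR. f_equal. exact Hm. }
  destruct HQR as [H1 _].
  assert (Hal : alpha = (INR P + e * cc / INR Q) / INR Q).
  { rewrite <- Halpha. field. lra. }
  assert (Harg : PI * INR (r k) * alpha = (- e) * (yk k + hk k) + IZR mz * PI).
  { rewrite Hal. unfold yk, hk, u.
    replace (PI * INR (r k) * ((INR P + e * cc / INR Q) / INR Q)) with
      (PI / INR Q * (INR (r k) * INR P) + e * (PI * cc * (INR (r k) / INR Q) / INR Q)) by (field; lra).
    rewrite HmR. field. lra. }
  destruct (Hz k Hk) as [[Hz1 Hz2] [_ Hy]].
  assert (Hs : 0 < sin (yk k + hk k)) by (apply sin_gt_0; lra).
  rewrite Harg, Rabs_mult, sin_shift_Z, (Rabs_pos_eq 2) by lra.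
  destruct He as [He'|He'].
  - replace (- e * (yk k + hk k)) with (- (yk k + hk k)) by (rewrite He'; ring).
    rewrite sin_neg, Rabs_Ropp, Rabs_pos_eq; lra.
  - replace (- e * (yk k + hk k)) with (yk k + hk k) by (rewrite He'; ring).
    rewrite Rabs_pos_eq; lra.
Qed.

Lemma HtermQ : Rabs (2 * sin (PI * INR Q * alpha)) = 2 * sin (PI * cc / INR Q).
Proof.
  destruct HQR as [H1 _]. destruct Hc as [[Hc1 Hc2] _]. pose proof PI_bounds.
  assert (Harg : PI * INR Q * alpha = e * (PI * cc / INR Q) + IZR (Z.of_nat P) * PI).
  { rewrite Rmult_assoc, (Rmult_comm (INR Q)), Halpha, <- INR_IZR_INZ. field. lra. }
  assert (Hs : 0 < sin (PI * cc / INR Q)).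
  { apply sin_gt_0. apply Rdiv_lt_0_compat; nra.
    apply Rmult_lt_reg_r with (INR Q). lra.
    replace (PI * cc / INR Q * INR Q) with (PI * cc) by (field; lra). nra. }
  rewrite Harg, Rabs_mult, sin_shift_Z, (Rabs_pos_eq 2) by lra.
  destruct He as [He'|He'].
  - replace (e * (PI * cc / INR Q)) with (PI * cc / INR Q) by (rewrite He'; ring).
    rewrite Rabs_pos_eq; lra.
  - replace (e * (PI * cc / INR Q)) with (- (PI * cc / INR Q)) by (rewrite He'; ring).
    rewrite sin_neg, Rabs_Ropp, Rabs_pos_eq; lra.
Qed.

Lemma HPform : Defs.P Q alpha = prod1 (fun k => 2 * sin (yk k + hk k)) (Q - 1) * (2 * sin (PI * cc / INR Q)).
Proof.
  destruct HQs as [_ [_ H3]].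
  unfold Defs.P. replace Q with (S (Q - 1)) at 1 by lia.
  change (prod1 ?f (S ?m)) with (prod1 f m * f (S m)).
  replace (S (Q - 1)) with Q by lia. rewrite HtermQ. f_equal.
  rewrite <- (prod1_perm r (fun r0 => Rabs (2 * sin (PI * INR r0 * alpha)))).
  - apply prod1_ext. intros k Hk. apply Hterm. exact Hk.
  - exact Hr_range.
  - exact Hr_inj.
Qed.

Lemma Hsin_pos k : (1 <= k <= Q - 1)%nat -> 0 < sin (yk k) /\ 0 < sin (yk k + hk k).
Proof.
  intros Hk. destruct (Hz k Hk) as [[Hz1 Hz2] [_ Hy]].
  split; apply sin_gt_0; lra.
Qed.

Lemma HlnP : ln (Defs.P Q alpha) = ln (INR Q) + ln (2 * sin (PI * cc / INR Q)) +
  sum1 (fun k => ln (sin (yk k + hk k) / sin (yk k))) (Q - 1).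
Proof.
  destruct HQR as [H1 _]. destruct Hc as [[Hc1 Hc2] _]. pose proof PI_bounds.
  assert (Hs : 0 < sin (PI * cc / INR Q)).
  { apply sin_gt_0. apply Rdiv_lt_0_compat; nra.
    apply Rmult_lt_reg_r with (INR Q). lra.
    replace (PI * cc / INR Q * INR Q) with (PI * cc) by (field; lra). nra. }
  rewrite HPform, ln_mult.
  2:{ apply prod1_pos. intros k Hk. pose proof (Hsin_pos k Hk). lra. }
  2:{ lra. }
  rewrite ln_prod1 by (intros k Hk; pose proof (Hsin_pos k Hk); lra).
  rewrite (sum1_ext _ (fun k => ln (2 * sin (yk k)) + ln (sin (yk k + hk k) / sin (yk k)))).
  2:{ intros k Hk. pose proof (Hsin_pos k Hk) as [Hs1 Hs2]. rewrite <- ln_mult.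
      f_equal. field. lra. lra. apply Rdiv_lt_0_compat; lra. }
  rewrite sum1_plus.
  rewrite <- ln_prod1.
  2:{ intros k Hk; pose proof (Hsin_pos k Hk); lra. }
  unfold yk. rewrite MC.prod_sin_id. ring.
  destruct HQs as [_ [_ H3]]. lia.
Qed.

Lemma HB k : (1 <= k <= Q - 1)%nat ->
  PI / INR Q <= 3 * (1 / INR k + 1 / INR (Q - k)) * sin (yk k).
Proof.
  intros Hk. destruct HQR as [H1 _]. pose proof PI_bounds.
  assert (HkR : 1 <= INR k) by (replace 1 with (INR 1) by reflexivity; apply le_INR; lia).
  assert (HkQ : INR k + 1 <= INR Q) by (rewrite <- S_INR; apply le_INR; lia).
  rewrite minus_INR by lia.
  assert (Hs : 0 < sin (yk k)) by (apply Hsin_pos; exact Hk).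
  assert (Ha1 : 0 < 1 / INR k) by (apply Rdiv_lt_0_compat; lra).
  assert (Ha2 : 0 < 1 / (INR Q - INR k)) by (apply Rdiv_lt_0_compat; lra).
  destruct (Rle_dec (2 * INR k) (INR Q)).
  - assert (Hy : yk k <= PI / 2).
    { unfold yk. apply Rmult_le_reg_r with (2 * INR Q). lra.
      replace (PI * INR k / INR Q * (2 * INR Q)) with (PI * (2 * INR k)) by (field; lra).
      replace (PI / 2 * (2 * INR Q)) with (PI * INR Q) by field. nra. }
    assert (Hsl : yk k / 3 <= sin (yk k)) by (apply sin_lin; unfold yk in *; split; [apply Rmult_le_pos; [nra|left; apply Rinv_0_lt_compat; lra] | lra]).
    assert (3 * (1 / INR k) * (yk k / 3) = PI / INR Q) by (unfold yk; field; lra).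
    assert (3 * (1 / INR k) * (yk k / 3) <= 3 * (1 / INR k) * sin (yk k)) by (apply Rmult_le_compat_l; lra).
    nra.
  - set (y' := PI - yk k).
    assert (Hy' : yk k = PI - y') by (unfold y'; ring).
    assert (Hy2 : 0 <= y' <= PI / 2).
    { unfold y', yk. split.
      - cut (PI * INR k / INR Q <= PI). lra. apply Rmult_le_reg_r with (INR Q). lra.
        replace (PI * INR k / INR Q * INR Q) with (PI * INR k) by (field; lra). nra.
      - apply Rmult_le_reg_r with (2 * INR Q). lra.
        replace ((PI - PI * INR k / INR Q) * (2 * INR Q)) with (PI * (2 * INR Q - 2 * INR k)) by (field; lra).
        replace (PI / 2 * (2 * INR Q)) with (PI * INR Q) by field. nra. }
    assert (Hsl : y' / 3 <= sin (yk k)) by (rewrite Hy', sin_PI_x; apply sin_lin; lra).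
    assert (3 * (1 / (INR Q - INR k)) * (y' / 3) = PI / INR Q) by (unfold y', yk; field; lra).
    assert (3 * (1 / (INR Q - INR k)) * (y' / 3) <= 3 * (1 / (INR Q - INR k)) * sin (yk k)) by (apply Rmult_le_compat_l; lra).
    nra.
Qed.

Lemma sum_inv_sq_rev : sum1 (fun k => / (INR (Q - k) * INR (Q - k))) (Q - 1) =
  sum1 (fun k => / (INR k * INR k)) (Q - 1).
Proof.
  rewrite (sum1_rev (fun k => / (INR k * INR k))).
  apply sum1_ext. intros k Hk. destruct HQs as [_ [_ H3]].
  replace (Q - 1 + 1 - k)%nat with (Q - k)%nat by lia. reflexivity.
Qed.

Lemma Hsecond : Rabs (sum1 (fun k => ln (sin (yk k + hk k) / sin (yk k))) (Q - 1) -
  sum1 (fun k => hk k * (cos (yk k) / sin (yk k))) (Q - 1)) <= 600.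
Proof.
  destruct HQR as [H1 _]. pose proof PI_bounds.
  rewrite <- sum1_minus.
  eapply Rle_trans. apply sum1_abs_le with
    (g := fun k => 72 * (/ (INR k * INR k) + / (INR (Q - k) * INR (Q - k))) + 40 * (PI / INR Q)^2).
  - intros k Hk.
    assert (HkR : 1 <= INR k) by (replace 1 with (INR 1) by reflexivity; apply le_INR; lia).
    assert (HkQ : 1 <= INR (Q - k)) by (replace 1 with (INR 1) by reflexivity; apply le_INR; lia).
    destruct (Hz k Hk) as [[Hz1 Hz2] [Hh Hy]].
    assert (Hd : 0 <= PI / INR Q <= 3 / 2).
    { split. left; apply Rdiv_lt_0_compat; lra.
      apply Rmult_le_reg_r with (INR Q). lra.
      replace (PI / INR Q * INR Q) with PI by (field; lra). lra. }
    set (B := 3 * (1 / INR k + 1 / INR (Q - k))).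
    assert (HB6 : 0 <= B <= 6).
    { unfold B. assert (0 < 1 / INR k <= 1).
      { split. apply Rdiv_lt_0_compat; lra. apply Rmult_le_reg_r with (INR k). lra.
        replace (1 / INR k * INR k) with 1 by (field; lra). lra. }
      assert (0 < 1 / INR (Q - k) <= 1).
      { split. apply Rdiv_lt_0_compat; lra. apply Rmult_le_reg_r with (INR (Q - k)). lra.
        replace (1 / INR (Q - k) * INR (Q - k)) with 1 by (field; lra). lra. }
      lra. }
    pose proof (lnrho (yk k) (hk k) (PI / INR Q) B Hy Hh Hd Hz1 (HB k Hk) HB6) as L.
    eapply Rle_trans. exact L.
    assert (4 * B^2 <= 72 * (/ (INR k * INR k) + / (INR (Q - k) * INR (Q - k)))).
    { unfold B.
      replace (/ (INR k * INR k)) with ((1 / INR k)^2) by (field; lra).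
      replace (/ (INR (Q - k) * INR (Q - k))) with ((1 / INR (Q - k))^2) by (field; lra).
      pose proof (pow2_ge_0 (1 / INR k - 1 / INR (Q - k))). nra. }
    lra.
  - rewrite sum1_plus, sum1_const.
    rewrite sum1_scal, sum1_plus, sum_inv_sq_rev.
    pose proof (sum_inv_sq (Q - 1)).
    assert (0 < 2 / (INR (Q - 1) + 1)) by (apply Rdiv_lt_0_compat; [lra| pose proof (pos_INR (Q - 1)); lra]).
    assert (HQ1 : INR (Q - 1) * (40 * (PI / INR Q) ^ 2) <= 214).
    { rewrite minus_INR by (destruct HQs as [_ [_ H3]]; lia). simpl INR.
      replace ((INR Q - 1) * (40 * (PI / INR Q) ^ 2)) with (40 * PI^2 * ((INR Q - 1) / (INR Q * INR Q))) by (field; lra).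
      assert ((INR Q - 1) / (INR Q * INR Q) <= 1 / 3).
      { apply Rmult_le_reg_r with (INR Q * INR Q). nra.
        replace ((INR Q - 1) / (INR Q * INR Q) * (INR Q * INR Q)) with (INR Q - 1) by (field; lra). nra. }
      assert (PI^2 <= 16) by nra.
      assert (0 <= (INR Q - 1) / (INR Q * INR Q)) by (apply Rmult_le_pos; [lra | left; apply Rinv_0_lt_compat; nra]).
      nra. }
    lra.
Qed.

Lemma Hg k : (1 <= k <= Q - 1)%nat -> u k = frac (beta * INR k).
Proof.
  intros Hk. rewrite Hbeta. destruct HQR as [H1 _].
  replace (INR Q' / INR Q * INR k) with (INR (k * Q') / INR Q) by (rewrite mult_INR; field; lra).
  rewrite frac_nat by (destruct HQs as [_ [_ H3]]; lia). reflexivity.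
Qed.

Lemma Hurev k : (1 <= k <= Q - 1)%nat -> u (Q - k) = 1 - u k.
Proof.
  intros Hk. unfold u, r. rewrite (rr_rev Q Q' P P' eZ HeZ Hdet HQ'b k Hk).
  pose proof (Hr_range k Hk). unfold r in H. destruct HQR as [H1 _].
  rewrite minus_INR by lia. field. lra.
Qed.

Lemma Hcot_sum : Rabs (sum1 (fun k => hk k * (cos (yk k) / sin (yk k))) (Q - 1) +
  cc * sum1 (fun k => u k * (1 / INR k - 1 / INR (Q - k))) (Q - 1)) <= 8.
Proof.
  destruct HQR as [H1 _]. pose proof PI_bounds. destruct Hc as [[Hc1 Hc2] _].
  rewrite <- sum1_scal, <- sum1_plus.
  eapply Rle_trans. apply sum1_abs_le with (g := fun _ => 2 * PI / INR Q).
  - intros k Hk. destruct (Hz k Hk) as [_ [_ Hy]]. pose proof (Hu k Hk) as [Hu1 Hu2].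
    assert (HkR : 1 <= INR k) by (replace 1 with (INR 1) by reflexivity; apply le_INR; lia).
    assert (HkQ : 1 <= INR (Q - k)) by (replace 1 with (INR 1) by reflexivity; apply le_INR; lia).
    pose proof (cot_approx (yk k) Hy) as Hca.
    assert (E1 : 1 / yk k = INR Q / PI * (1 / INR k)) by (unfold yk; field; lra).
    assert (E2 : 1 / (PI - yk k) = INR Q / PI * (1 / INR (Q - k))).
    { unfold yk. rewrite minus_INR in * by lia. field. repeat split; try lra.
      intro Hc0. assert (PI * (INR Q - INR k) = 0) by (field_simplify in Hc0; lra). nra. }
    rewrite E1, E2 in Hca.
    replace (hk k * (cos (yk k) / sin (yk k)) + cc * (u k * (1 / INR k - 1 / INR (Q - k))))
      with (- (PI * cc * u k / INR Q) * (cos (yk k) / sin (yk k) - (INR Q / PI * (1 / INR k) - INR Q / PI * (1 / INR (Q - k))))).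
    2:{ unfold hk. pose proof (Hsin_pos k Hk). field; repeat split; lra. }
    rewrite Rabs_mult, Rabs_Ropp, Rabs_pos_eq.
    2:{ apply Rmult_le_pos; [|left; apply Rinv_0_lt_compat; lra]. apply Rmult_le_pos; [nra|lra]. }
    assert (PI * cc * u k / INR Q <= PI / INR Q).
    { unfold Rdiv. apply Rmult_le_compat_r. left; apply Rinv_0_lt_compat; lra.
      assert (cc * u k <= 1) by nra. nra. }
    assert (0 <= PI * cc * u k / INR Q) by (apply Rmult_le_pos; [|left; apply Rinv_0_lt_compat; lra]; apply Rmult_le_pos; [nra|lra]).
    pose proof (Rabs_pos (cos (yk k) / sin (yk k) - (INR Q / PI * (1 / INR k) - INR Q / PI * (1 / INR (Q - k))))).
    replace (2 * PI / INR Q) with (PI / INR Q * 2) by (field; lra).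
    apply Rmult_le_compat; lra.
  - rewrite sum1_const. rewrite minus_INR by (destruct HQs as [_ [_ H3]]; lia). simpl INR.
    replace ((INR Q - 1) * (2 * PI / INR Q)) with (2 * PI - 2 * PI / INR Q) by (field; lra).
    assert (0 < 2 * PI / INR Q) by (apply Rdiv_lt_0_compat; lra). lra.
Qed.

Lemma Hu_sum : sum1 (fun k => u k * (1 / INR k - 1 / INR (Q - k))) (Q - 1) =
  2 * sum1 (fun k => (frac (beta * INR k) - / 2) / INR k) (Q - 1).
Proof.
  destruct HQs as [_ [_ H3]].
  rewrite (sum1_ext _ (fun k => u k / INR k - u k / INR (Q - k))).
  2:{ intros k Hk. unfold Rdiv. ring. }
  rewrite sum1_minus.
  rewrite (sum1_rev (fun k => u k / INR (Q - k))).
  rewrite (sum1_ext (fun k => u (Q - 1 + 1 - k)%nat / INR (Q - (Q - 1 + 1 - k))) (fun k => (1 - u k) / INR k)).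
  2:{ intros k Hk. replace (Q - 1 + 1 - k)%nat with (Q - k)%nat by lia.
      replace (Q - (Q - k))%nat with k by lia. rewrite Hurev by lia. reflexivity. }
  rewrite <- sum1_minus, <- sum1_scal. apply sum1_ext. intros k Hk.
  cbv beta. rewrite <- Hg by lia. unfold Rdiv. lra.
Qed.

Let Ssum := sum1 (fun t => D t beta / (INR t * INR (t + 1))) (M alpha n - 1).

Lemma Habel_bound : Rabs (sum1 (fun k => (frac (beta * INR k) - / 2) / INR k) (Q - 1) - Ssum) <= 1.
Proof.
  destruct HQs as [_ [_ H3]].
  set (g := fun s => frac (beta * INR s) - / 2).
  replace (Q - 1)%nat with (S (Q - 2)) by lia.
  change (sum1 (fun k => (frac (beta * INR k) - / 2) / INR k) (S (Q - 2))) with (sum1 (fun k => g k / INR k) (S (Q - 2))).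
  rewrite (abel g (Q - 2)).
  set (Mn := M alpha n).
  assert (HM : Mn = ((Q - 1) / 2)%nat) by reflexivity.
  assert (HM1 : (1 <= Mn)%nat) by (rewrite HM; apply Nat.div_le_lower_bound; lia).
  assert (HMd : (Q - 1 = 2 * Mn + (Q - 1) mod 2 /\ (Q - 1) mod 2 < 2)%nat).
  { rewrite HM. split. apply Nat.div_mod. lia. apply Nat.mod_upper_bound. lia. }
  assert (HM2 : (Q - 2 = (Mn - 1) + (Q - 1 - Mn))%nat) by lia.
  assert (HM3 : (Q - 1 - Mn <= Mn + 1)%nat) by lia.
  fold Mn in Ssum. unfold Ssum.
  change (fun t => D t beta / (INR t * INR (t + 1))) with (fun t => sum1 g t / (INR t * INR (t + 1))).
  set (F := fun t => sum1 g t / (INR t * INR (t + 1))).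
  replace (sum1 F (Q - 2)) with (sum1 F (Mn - 1) + sum1 (fun t => F (Mn - 1 + t)%nat) (Q - 1 - Mn))
    by (rewrite HM2 at 1; symmetry; apply sum1_split).
  replace (sum1 g (S (Q - 2)) / INR (S (Q - 2)) + (sum1 F (Mn - 1) + sum1 (fun t => F (Mn - 1 + t)%nat) (Q - 1 - Mn)) - sum1 F (Mn - 1))
    with (sum1 g (S (Q - 2)) / INR (S (Q - 2)) + sum1 (fun t => F (Mn - 1 + t)%nat) (Q - 1 - Mn)) by ring.
  eapply Rle_trans. apply Rabs_triang.
  assert (B1 : Rabs (sum1 g (S (Q - 2)) / INR (S (Q - 2))) <= / 2).
  { pose proof (D_bound (S (Q - 2)) beta) as HD. change (D (S (Q - 2)) beta) with (sum1 g (S (Q - 2))) in HD.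
    assert (0 < INR (S (Q - 2))) by (apply lt_0_INR; lia).
    unfold Rdiv. rewrite Rabs_mult, Rabs_inv, (Rabs_pos_eq (INR _)) by lra.
    apply Rmult_le_reg_r with (INR (S (Q - 2))). lra.
    rewrite Rmult_assoc, Rinv_l by lra. lra. }
  assert (B2 : Rabs (sum1 (fun t => F (Mn - 1 + t)%nat) (Q - 1 - Mn)) <= / 2).
  { eapply Rle_trans. apply sum1_abs_le with (g := fun _ => / (2 * (INR Mn + 1))).
    - intros t Ht. unfold F. set (t0 := (Mn - 1 + t)%nat).
      assert (Ht0 : (Mn <= t0)%nat) by (unfold t0; lia).
      pose proof (D_bound t0 beta) as HD. change (D t0 beta) with (sum1 g t0) in HD.
      assert (HMR : INR Mn <= INR t0) by (apply le_INR; lia).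
      assert (1 <= INR Mn) by (replace 1 with (INR 1) by reflexivity; apply le_INR; lia).
      rewrite plus_INR. simpl (INR 1).
      unfold Rdiv. rewrite Rabs_mult, Rabs_inv, (Rabs_pos_eq (INR t0 * (INR t0 + 1))) by nra.
      apply Rmult_le_reg_r with (INR t0 * (INR t0 + 1)). nra.
      rewrite Rmult_assoc, Rinv_l by nra.
      replace (/ (2 * (INR Mn + 1)) * (INR t0 * (INR t0 + 1))) with (INR t0 / 2 * ((INR t0 + 1) / (INR Mn + 1))) by (field; lra).
      assert (1 <= (INR t0 + 1) / (INR Mn + 1)).
      { apply Rmult_le_reg_r with (INR Mn + 1). lra. replace ((INR t0 + 1) / (INR Mn + 1) * (INR Mn + 1)) with (INR t0 + 1) by (field; lra). lra. }
      assert (0 <= INR t0 / 2) by (pose proof (pos_INR t0); lra).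
      nra.
    - rewrite sum1_const.
      assert (INR (Q - 1 - Mn) <= INR Mn + 1) by (rewrite <- S_INR; apply le_INR; lia).
      assert (1 <= INR Mn) by (replace 1 with (INR 1) by reflexivity; apply le_INR; lia).
      pose proof (pos_INR (Q - 1 - Mn)).
      replace (INR (Q - 1 - Mn) * / (2 * (INR Mn + 1))) with (INR (Q - 1 - Mn) / (INR Mn + 1) / 2) by (field; lra).
      assert (INR (Q - 1 - Mn) / (INR Mn + 1) <= 1).
      { apply Rmult_le_reg_r with (INR Mn + 1). lra. replace (INR (Q - 1 - Mn) / (INR Mn + 1) * (INR Mn + 1)) with (INR (Q - 1 - Mn)) by (field; lra). lra. }
      lra. }
  lra.
Qed.

Lemma Hfirst : Rabs (sum1 (fun k => hk k * (cos (yk k) / sin (yk k))) (Q - 1) + 2 * cc * Ssum) <= 10.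
Proof.
  pose proof Hcot_sum as H1. rewrite Hu_sum in H1. pose proof Habel_bound as H2.
  destruct Hc as [[Hc1 Hc2] _].
  set (A := sum1 (fun k => hk k * (cos (yk k) / sin (yk k))) (Q - 1)) in *.
  set (G := sum1 (fun k => (frac (beta * INR k) - / 2) / INR k) (Q - 1)) in *.
  apply Rabs_le2 in H1. apply Rabs_le2 in H2.
  apply Rabs_le. split; nra.
Qed.

Lemma HP_pos : 0 < Defs.P Q alpha.
Proof.
  rewrite HPform. destruct HQR as [H1 _]. destruct Hc as [[Hc1 Hc2] _]. pose proof PI_bounds.
  apply Rmult_lt_0_compat.
  - apply prod1_pos. intros k Hk. pose proof (Hsin_pos k Hk). lra.
  - assert (0 < sin (PI * cc / INR Q)); [|lra].
    apply sin_gt_0. apply Rdiv_lt_0_compat; nra.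
    apply Rmult_lt_reg_r with (INR Q). lra.
    replace (PI * cc / INR Q * INR Q) with (PI * cc) by (field; lra). nra.
Qed.

Lemma Htheta : theta_expr alpha n = cc * exp (- (2 * cc * Ssum)).
Proof. unfold theta_expr. fold cc. fold beta. fold Ssum. f_equal. f_equal. ring. Qed.

Lemma Hmain : Rabs (ln (Defs.P Q alpha) - ln (theta_expr alpha n)) <= 617.
Proof.
  destruct HQR as [H1 _]. destruct Hc as [[Hc1 Hc2] _]. pose proof PI_bounds.
  rewrite Htheta, ln_mult, ln_exp by (try apply exp_pos; lra).
  rewrite HlnP.
  set (t := PI * cc / INR Q).
  assert (Ht : 0 < t <= 2).
  { unfold t. split. apply Rdiv_lt_0_compat; nra.
    apply Rmult_le_reg_r with (INR Q). lra.
    replace (PI * cc / INR Q * INR Q) with (PI * cc) by (field; lra). nra. }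
  assert (Hs1 : t / 3 <= sin t) by (apply sin_lin; lra).
  assert (Hs2 : sin t <= t) by (apply sin_ub1; lra).
  set (w := INR Q * (2 * sin t) / cc).
  assert (Hw : 2 <= w <= 8).
  { unfold w. assert (INR Q * t = PI * cc) by (unfold t; field; lra).
    split.
    - apply Rmult_le_reg_r with cc. lra.
      replace (INR Q * (2 * sin t) / cc * cc) with (INR Q * (2 * sin t)) by (field; lra). nra.
    - apply Rmult_le_reg_r with cc. lra.
      replace (INR Q * (2 * sin t) / cc * cc) with (INR Q * (2 * sin t)) by (field; lra). nra. }
  assert (Hlw : ln (INR Q) + ln (2 * sin t) - ln cc = ln w).
  { unfold w. assert (0 < sin t) by lra. unfold Rdiv.
    assert (P1 : 0 < 2 * sin t) by lra.
    assert (P2 : 0 < INR Q * (2 * sin t)) by (apply Rmult_lt_0_compat; lra).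
    assert (P3 : 0 < / cc) by (apply Rinv_0_lt_compat; lra).
    rewrite (ln_mult _ _ P2 P3), (ln_mult (INR Q) (2 * sin t)) by lra.
    rewrite ln_Rinv by lra. ring. }
  pose proof (ln_bounds w ltac:(lra)) as [Hl1 Hl2].
  assert (1 / 2 <= 1 - / w).
  { assert (/ w <= 1 / 2). { apply Rmult_le_reg_r with w. lra. rewrite Rinv_l by lra. lra. } lra. }
  pose proof Hsecond as HS. pose proof Hfirst as HF.
  set (L := sum1 (fun k => ln (sin (yk k + hk k) / sin (yk k))) (Q - 1)) in *.
  set (A := sum1 (fun k => hk k * (cos (yk k) / sin (yk k))) (Q - 1)) in *.
  apply Rabs_le2 in HS. apply Rabs_le2 in HF.
  apply Rabs_le. split; lra.
Qed.

Lemma Htheta_pos : 0 < theta_expr alpha n.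
Proof. rewrite Htheta. destruct Hc as [[Hc1 _] _]. apply Rmult_lt_0_compat. lra. apply exp_pos. Qed.

End Main.

Lemma exp_mono x y : x <= y -> exp x <= exp y.
Proof. intros [H|H]. left; apply exp_increasing; exact H. rewrite H; lra. Qed.

Theorem theorem1p1 (alpha : R) :
  0 < alpha < 1 -> irrational alpha ->
  exists cc CC : R, 0 < cc /\ cc <= CC /\
    exists N0 : nat, forall n : nat, (N0 <= n)%nat ->
      cc * theta_expr alpha n <= P (q alpha n) alpha <= CC * theta_expr alpha n.
Proof.
  intros H1 H2.
  assert (Hok : irr_ok alpha) by (split; assumption).
  exists (exp (-617)), (exp 617). split. apply exp_pos. split.
  left; apply exp_increasing; lra.
  exists 4%nat. intros n Hn.
  pose proof (Hmain alpha Hok n Hn) as Hm.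
  pose proof (HP_pos alpha Hok n Hn) as HP.
  pose proof (Htheta_pos alpha Hok n Hn) as HT.
  apply Rabs_le2 in Hm.
  rewrite <- (exp_ln _ HP), <- (exp_ln _ HT), <- !exp_plus.
  split; apply exp_mono; lra.
Qed.
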